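(* Let $\sigma:\mathbb{R}\to\mathbb{R}$ be continuous, let $K\subset\mathbb{R}^{d_{in}}$ be compact, and let $F:\mathbb{R}^{d_{in}}\to\mathbb{R}^{d_{out}}$ be a neural network function $F(x)=W_L(A_{L-1}\circ\dots\circ A_1(x))+b_L$ with $L$ layers, where $A_j(x)=\sigma(W_jx+b_j)$, $W_j\in\mathbb{R}^{d_j\times d_{j-1}}$, $b_j\in\mathbb{R}^{d_j}$, $d_0=d_{in}$, $d_L=d_{out}$, and width $\omega_F=\max\{d_1,\dots,d_L\}\le d_{in}$. Regard each $b_j$, $j=1,\dots,L-1$, as a vector in $\mathbb{R}^{d_{in}}$ by padding with zero components, and $W_L$ as a matrix in $\mathbb{R}^{d_{out}\times d_{in}}$ by padding with zero columns. Then for every $\varepsilon>0$ there exist invertible matrices $\tilde W_j\in\mathbb{R}^{d_{in}\times d_{in}}$, $j=1,\dots,L-1$, such that the function $\tilde F(x)=W_L(\tilde A_{L-1}\circ\dots\circ\tilde A_1(x))+b_L$ with $\tilde A_j(x)=\sigma(\tilde W_jx+b_j)$ satisfies $\|\tilde F-F\|_K<\varepsilon$.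
   Context: $\sigma$ is applied componentwise to vectors. For $f:K\to\mathbb{R}^m$, $\|f\|_K=\sup\{\|f(x)\|:x\in K\}$ with $\|\cdot\|$ the Euclidean norm. *)

(* Defs.v *)
From HB Require Import structures.
From mathcomp Require Import all_boot all_order all_algebra.
From mathcomp Require Import all_classical all_reals all_analysis.
Set Implicit Arguments. Unset Strict Implicit. Unset Printing Implicit Defensive.
Import Order.TTheory GRing.Theory Num.Theory numFieldNormedType.Exports.
Local Open Scope ring_scope.
Local Open Scope classical_set_scope.

Definition eucl (R : realType) (m : nat) (v : 'cV[R]_m) : R :=
  Num.sqrt (\sum_(i < m) (v i 0) ^+ 2).

Definition supnormK (R : realType) (m p : nat) (K : set 'cV[R]_m)
  (f : 'cV[R]_m -> 'cV[R]_p) : R :=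
  sup [set eucl (f x) | x in K].

Definition padcol (R : realType) (m p : nat) (v : 'cV[R]_m) : 'cV[R]_p :=
  \col_(i < p) (match @insub _ (fun k => k < m)%N _ (val i) with
                | Some k => v k 0 | None => 0 end).

Definition padcols (R : realType) (q m p : nat) (A : 'M[R]_(q, m)) : 'M[R]_(q, p) :=
  \matrix_(i < q, j < p) (match @insub _ (fun k => k < m)%N _ (val j) with
                | Some k => A i k | None => 0 end).

(* Network with layer dimensions d 0 = d_in, d 1, ..., d (n.+1) = d_out,
   i.e. L = n.+1 layers; layer j (0-based) has weight W j : d (j+1) x d j.
   hidden k x = A_k o ... o A_1 (x)  (paper indexing). *)
Fixpoint hidden (R : realType) (σ : R -> R) (d : nat -> nat)
  (W : forall j, 'M[R]_(d j.+1, d j)) (b : forall j, 'cV[R]_(d j.+1))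
  (x : 'cV[R]_(d 0%N)) (k : nat) {struct k} : 'cV[R]_(d k) :=
  match k return 'cV[R]_(d k) with
  | 0 => x
  | k'.+1 => map_mx σ (W k' *m hidden σ W b x k' + b k')
  end.

Definition net (R : realType) (σ : R -> R) (n : nat) (d : nat -> nat)
  (W : forall j, 'M[R]_(d j.+1, d j)) (b : forall j, 'cV[R]_(d j.+1))
  (x : 'cV[R]_(d 0%N)) : 'cV[R]_(d n.+1) :=
  W n *m hidden σ W b x n + b n.

Fixpoint thidden (R : realType) (σ : R -> R) (din : nat) (d : nat -> nat)
  (Wt : nat -> 'M[R]_din) (b : forall j, 'cV[R]_(d j.+1))
  (x : 'cV[R]_din) (k : nat) {struct k} : 'cV[R]_din :=
  match k with
  | 0 => x
  | k'.+1 => map_mx σ (Wt k' *m thidden σ Wt b x k' + padcol din (b k'))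
  end.

Definition tnet (R : realType) (σ : R -> R) (n : nat) (d : nat -> nat)
  (W : forall j, 'M[R]_(d j.+1, d j)) (b : forall j, 'cV[R]_(d j.+1))
  (Wt : nat -> 'M[R]_(d 0%N)) (x : 'cV[R]_(d 0%N)) : 'cV[R]_(d n.+1) :=
  padcols (d 0%N) (W n) *m thidden σ Wt b x n + b n.

(* Main.v *)
Require Import Defs.
From HB Require Import structures.
From mathcomp Require Import all_boot all_order all_algebra.
From mathcomp Require Import all_classical all_reals all_analysis.
Import Order.TTheory GRing.Theory Num.Theory numFieldNormedType.Exports.
Local Open Scope ring_scope.
Local Open Scope classical_set_scope.
Section S.
Variable R : realType.

Lemma sum_pad p q (A : 'I_p -> R) (s : 'I_q -> R) (h : 'I_p -> R) :
  (p <= q)%N -> (forall (l : 'I_q) (l' : 'I_p), val l = val l' -> s l = h l') ->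
  \sum_(l < q) (match @insub _ (fun k => (k < p)%N) 'I_p (val l) with
                | Some l' => A l' | None => 0 end) * s l
  = \sum_(l < p) A l * h l.
Proof.
move=> pq hs.
pose G (k : nat) := match @insub _ (fun k => (k < p)%N) 'I_p k with
                | Some l' => A l' * h l' | None => 0 end.
transitivity (\sum_(l < q) G l).
  apply: eq_bigr => l _; rewrite /G; case: insubP => [u _ hu|_]; last by rewrite mul0r.
  by rewrite (hs l u).
transitivity (\sum_(l < p) G l); last first.
  by apply: eq_bigr => l _; rewrite /G valK.
rewrite (big_ord_widen q G pq) [RHS]big_mkcond /=; apply: eq_bigr => l _.
by case: ifP => // lp; rewrite /G insubN // lp.
Qed.
End S.
Section S2.
Variables (R : realType) (σ : R -> R) (n : nat) (d : nat -> nat)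
  (W : forall j, 'M[R]_(d j.+1, d j)) (b : forall j, 'cV[R]_(d j.+1)).
Hypothesis hd : forall j, (0 < j <= n.+1)%N -> (d j <= d 0)%N.

Definition Pm (j : nat) : 'M[R]_(d 0%N) :=
  \matrix_(i, l) match @insub _ (fun k => (k < d j.+1)%N) 'I_(d j.+1) (val i) with
     | Some i' => match @insub _ (fun k => (k < d j)%N) 'I_(d j) (val l) with
                  | Some l' => W j i' l' | None => 0 end
     | None => 0 end.

Lemma hdk k : (k <= n.+1)%N -> (d k <= d 0)%N.
Proof. by case: k => // k hk; apply: hd. Qed.

Lemma exact_hidden x k : (k <= n)%N ->
  forall (i : 'I_(d 0%N)) (i' : 'I_(d k)), val i = val i' ->
  thidden σ Pm b x k i 0 = hidden σ W b x k i' 0.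
Proof.
elim: k => [_ i i' hv|k IH hk i i' hv] /=.
  by congr (x _ _); apply: val_inj.
rewrite !mxE; congr σ; congr (_ + _).
  under eq_bigr => l _ do rewrite mxE hv valK.
  apply: sum_pad; first by apply: hdk; exact: leqW (ltnW hk).
  by move=> l l' e; apply: IH => //; apply: ltnW.
by rewrite hv valK.
Qed.

Lemma exact_net x : tnet σ n W b Pm x = net σ n W b x.
Proof.
apply/matrixP => i j; rewrite !mxE (ord1 j); congr (_ + _).
under eq_bigr => l _ do rewrite mxE.
apply: sum_pad; first by apply: hdk; apply: leqW.
by move=> l l' e; apply: exact_hidden.
Qed.
End S2.
Arguments Pm {R d} W j.
Section S3.
Variable R : realType.

Lemma cvg_sumf {T : Type} (F : set_system T) {FF : Filter F} (I : finType)
  (f : I -> T -> R) (a : I -> R) :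
  (forall i, f i @ F --> a i) -> (fun p => \sum_i f i p) @ F --> \sum_i a i.
Proof.
move=> hf; rewrite unlock /=.
elim: (index_enum I) => [|x s IH] /=.
  exact: cvg_cst.
exact: cvgD.
Qed.

Lemma entry_cont (a c : nat) (i : 'I_a) (j : 'I_c) :
  continuous (fun M : 'M[R]_(a, c) => M i j).
Proof.
move=> M U /nbhs_ballP [e e0 he]; apply/nbhs_ballP; exists e => // N [_ hN].
exact: he (hN i j).
Qed.
End S3.
Section S4.
Variables (R : realType) (σ : R -> R) (n : nat) (d : nat -> nat)
  (W : forall j, 'M[R]_(d j.+1, d j)) (b : forall j, 'cV[R]_(d j.+1)).
Hypothesis hσ : continuous σ.

Definition Wt (s : R) (j : nat) : 'M[R]_(d 0%N) := Pm W j + s%:M.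

Lemma cont_th {T : Type} (F : set_system T) {FF : Filter F}
  (X : T -> 'cV[R]_(d 0%N)) (S : T -> R) y s :
  X @ F --> y -> S @ F --> s -> forall k (i : 'I_(d 0%N)),
  (fun p => thidden σ (Wt (S p)) b (X p) k i 0) @ F --> thidden σ (Wt s) b y k i 0.
Proof.
move=> hX hS; elim=> [|k IH] i /=.
  exact: (continuous_cvg _ (@entry_cont R _ _ i 0 y) hX).
have E : forall t z, (map_mx σ (Wt t k *m z + padcol (d 0) (b k))) i 0 =
   σ (\sum_l (Pm W k i l + t *+ (i == l)) * z l 0 + padcol (d 0) (b k) i 0).
  by move=> t z; rewrite !mxE; congr (σ (_ + _)); apply: eq_bigr => l _; rewrite !mxE.
rewrite E.
have -> : (fun p => (map_mx σ (Wt (S p) k *m thidden σ (Wt (S p)) b (X p) k +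
    padcol (d 0) (b k))) i 0) = σ \o (fun p => \sum_l (Pm W k i l + S p *+ (i == l)) *
    thidden σ (Wt (S p)) b (X p) k l 0 + padcol (d 0) (b k) i 0).
  by apply: funext => p /=; rewrite E.
apply: continuous_cvg; first exact: hσ.
apply: cvgD; last exact: cvg_cst.
apply: cvg_sumf => l; apply: cvgM; last exact: IH.
apply: cvgD; first exact: cvg_cst.
case: (i == l).
  by under eq_fun do rewrite mulr1n; rewrite mulr1n.
by under eq_fun do rewrite mulr0n; rewrite mulr0n; exact: cvg_cst.
Qed.

Lemma cont_tnet {T : Type} (F : set_system T) {FF : Filter F}
  (X : T -> 'cV[R]_(d 0%N)) (S : T -> R) y s :
  X @ F --> y -> S @ F --> s -> forall (i : 'I_(d n.+1)),
  (fun p => tnet σ n W b (Wt (S p)) (X p) i 0) @ F --> tnet σ n W b (Wt s) y i 0.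
Proof.
move=> hX hS i.
have E : forall t z, tnet σ n W b (Wt t) z i 0 =
   \sum_l padcols (d 0) (W n) i l * thidden σ (Wt t) b z n l 0 + b n i 0.
  by move=> t z; rewrite !mxE.
rewrite E; under eq_fun do rewrite E.
apply: cvgD; last exact: cvg_cst.
apply: cvg_sumf => l; apply: cvgM; first exact: cvg_cst.
exact: cont_th.
Qed.
End S4.
Arguments Wt {R d} W s j.
Arguments cont_tnet {R σ n d W b} hσ {T F FF X S y s} hX hS i.
Section S5.
Variable R : realType.

Lemma det_shift m (A : 'M[R]_m) t : (char_poly (- A)).[t] = \det (A + t%:M).
Proof.
rewrite /char_poly -horner_evalE -det_map_mx; congr (\det _).
apply/matrixP => i j; rewrite !mxE /= horner_evalE.
rewrite !hornerE /=.
by rewrite hornerMn hornerX opprK addrC.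
Qed.

Lemma pick_t (Q : {poly R}) δ : Q != 0 -> 0 < δ -> exists t, 0 < t < δ /\ Q.[t] != 0.
Proof.
move=> Q0 d0; apply: contrapT => hall.
have root_all : forall t, 0 < t < δ -> Q.[t] = 0.
  by move=> t ht; apply/eqP/negPn/negP => h; apply: hall; exists t; split.
pose rs := [seq δ / (k.+2)%:R | k <- iota 0 (size Q)].
suff [h1 h2] : all (root Q) rs /\ uniq rs.
  by have := max_poly_roots Q0 h1 h2; rewrite size_map size_iota ltnn.
split.
  apply/allP => _ /mapP [k _ ->]; apply/eqP; apply: root_all.
  have c1 : 1 < (k.+2)%:R :> R by rewrite ltr1n.
  rewrite divr_gt0 ?ltr0n //= ltr_pdivrMr ?ltr0n // ltr_pMr //.
rewrite map_inj_uniq ?iota_uniq // => a c /= h.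
have : (a.+2)%:R^-1 = (c.+2)%:R^-1 :> R.
  by apply: (mulfI (lt0r_neq0 d0)).
move/invr_inj/eqP; rewrite eqr_nat => /eqP; by case.
Qed.
End S5.
Arguments pick_t {R} Q δ.
Theorem proposition8 (R : realType) (σ : R -> R) (n : nat) (d : nat -> nat)
  (W : forall j, 'M[R]_(d j.+1, d j)) (b : forall j, 'cV[R]_(d j.+1))
  (K : set 'cV[R]_(d 0%N)) :
  continuous σ -> compact K ->
  (forall j, (0 < j <= n.+1)%N -> (d j <= d 0)%N) ->
  forall eps : R, 0 < eps ->
  exists Wt : nat -> 'M[R]_(d 0%N),
    (forall j, (j < n)%N -> Wt j \in unitmx) /\
    supnormK K (fun x => tnet σ n W b Wt x - net σ n W b x) < eps.
Proof.
move=> hσ hK hd eps he.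
pose e2 := (eps / 2) ^+ 2.
have e2p : 0 < e2 by rewrite exprn_gt0 // divr_gt0.
pose Φ t x := tnet σ n W b (Wt W t) x.
pose g (p : 'cV[R]_(d 0%N) * R) := \sum_i ((Φ p.2 p.1 i 0 - Φ 0 p.1 i 0) ^+ 2).
have hg : forall x : 'cV[R]_(d 0%N), g @ filter_prod (nbhs x) (nbhs (0:R)) --> 0.
  move=> x.
  have eq0 : \sum_i ((Φ 0 x i 0 - Φ 0 x i 0) ^+ 2) = 0.
    by rewrite big1 // => i _; rewrite subrr expr0n.
  rewrite -[X in _ --> X]eq0.
  apply: cvg_sumf => i.
  under eq_fun do rewrite expr2.
  rewrite expr2.
  have h1 : (fun p : 'cV[R]_(d 0%N) * R => Φ p.2 p.1 i 0 - Φ 0 p.1 i 0)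
      @ filter_prod (nbhs x) (nbhs (0:R)) --> Φ 0 x i 0 - Φ 0 x i 0.
    apply: cvgB.
      have := @cont_tnet _ _ _ _ W b hσ _ (filter_prod (nbhs x) (nbhs (0:R))) _ fst snd x 0 cvg_fst cvg_snd i. apply.
    have := @cont_tnet _ _ _ _ W b hσ _ (filter_prod (nbhs x) (nbhs (0:R))) _ fst (fun=> 0) x 0 cvg_fst (cvg_cst 0) i. apply.
  exact: (cvgM h1 h1).
have hcov : \forall t \near nbhs (0:R), K `<=` (fun y => g (y, t) < e2).
  apply: ((compact_near_coveringP K).1 hK R (nbhs (0:R)) (fun t y => g (y, t) < e2)).
  move=> x Kx.
  have H := @cvgr_lt _ _ _ _ g 0 (hg x) e2 e2p.
  by apply: filterS (H _) => -[].
move: hcov => /nbhs_ballP [δ δ0 hδ].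
pose Q := \prod_(j < n) char_poly (- Pm W j).
have Q0 : Q != 0 by apply: monic_neq0; apply: monic_prod => j _; apply: char_poly_monic.
have [t [/andP [t0 tδ] Qt]] := pick_t _ _ Q0 δ0.
exists (Wt W t); split.
  move=> j hj; rewrite unitmxE unitfE -det_shift.
  apply: contraNneq Qt => h0.
  by rewrite /Q horner_prod (bigD1 (Ordinal hj)) //= h0 mul0r.
have W0 : Wt W 0 = Pm W.
  apply: funext => j; apply/matrixP => i l; rewrite /Wt !mxE mul0rn addr0 //.
have ub : forall x, K x ->
    eucl (tnet σ n W b (Wt W t) x - net σ n W b x) <= eps / 2.
  move=> x Kx.
  have hx : g (x, t) < e2.
    apply: (hδ t) => //; rewrite /ball /= sub0r normrN ger0_norm ?ltW //.
  rewrite /eucl -(@ger0_norm _ (eps / 2)); last by rewrite divr_ge0 // ltW.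
  rewrite -sqrtr_sqr ler_sqrt; last by apply: ltW.
  apply: ltW; apply: le_lt_trans hx; rewrite le_eqVlt; apply/orP; left; apply/eqP.
  rewrite /g /Φ /= W0 exact_net //.
  by apply: eq_bigr => i _; rewrite !mxE.
rewrite /supnormK.
case: (eqVneq [set eucl (tnet σ n W b (Wt W t) x - net σ n W b x) | x in K] set0)
  => [->|/set0P ne].
  by rewrite sup0.
apply: (@le_lt_trans _ _ (eps / 2)).
  by apply: ge_sup => // _ [x Kx <-]; apply: ub.
by rewrite ltr_pdivrMr // ltr_pMr // ltr1n.
Qed.
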